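(* Let $1\le p<\infty$, $q=p(p-1)^{-1}$, $\beta\in\mathbb{R}$, let $r\ge2$ be a natural number, and let $\omega$ be a function of the modulus of continuity type. Suppose there is a constant $C$ such that for all integers $n\ge0$, $$\left\{\int_{0}^{\frac{\pi}{r(n+1)}}\left(\frac{\omega(t)}{t\sin^{\beta}\frac{rt}{2}}\right)^{q}dt\right\}^{1/q}\le C(n+1)^{\beta+1/p}\,\omega\!\left(\frac{\pi}{n+1}\right).$$ Then for every $m\in\{0,1,\dots,[r/2]-1\}$ there is a constant $C'$ such that for all $n\ge0$, $$\left\{\int_{\frac{2(m+1)\pi}{r}-\frac{\pi}{r(n+1)}}^{\frac{2(m+1)\pi}{r}}\left(\frac{\omega(t)}{t\left|\sin\frac{rt}{2}\right|^{\beta}}\right)^{q}dt\right\}^{1/q}\le C'(n+1)^{\beta+1/p}\,\omega\!\left(\frac{\pi}{n+1}\right).$$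
   Context: A function of the modulus of continuity type is a nondecreasing continuous function $\omega$ on $[0,2\pi]$ with $\omega(0)=0$ and $\omega(\delta_1+\delta_2)\le\omega(\delta_1)+\omega(\delta_2)$ whenever $0\le\delta_1\le\delta_2\le\delta_1+\delta_2\le2\pi$. $[y]$ is the integer part of $y$. When $p=1$ (so $q=\infty$), $\{\int g^q\}^{1/q}$ is read as the essential supremum of $g$. *)

(* Defs.v *)
From HB Require Import structures.
From mathcomp Require Import all_boot all_order all_algebra.
From mathcomp Require Import all_classical all_reals all_analysis.
Set Implicit Arguments. Unset Strict Implicit. Unset Printing Implicit Defensive.
Import Order.TTheory GRing.Theory Num.Theory numFieldNormedType.Exports.
Local Open Scope classical_set_scope.
Local Open Scope ring_scope.

Definition modulus_type {R : realType} (w : R -> R) : Prop :=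
  [/\ {in `[0, 2 * pi]%R &, {homo w : x y / x <= y}},
      {within `[0, 2 * pi]%classic, continuous w},
      w 0 = 0 &
      forall d1 d2 : R, 0 <= d1 -> d1 <= d2 -> d1 + d2 <= 2 * pi ->
        w (d1 + d2) <= w d1 + w d2].

Definition conj_exp {R : realType} (p : R) : \bar R :=
  if p == 1 then +oo%E else (p / (p - 1))%:E.

Definition itv_norm {R : realType} (q : \bar R) (a b : R) (g : R -> R) : \bar R :=
  Lnorm (mrestr (@lebesgue_measure R) (measurable_itv `[a, b])) q (EFin \o g).

(* Main.v *)
Require Import Defs.
From HB Require Import structures.
From mathcomp Require Import all_boot all_order all_algebra.
From mathcomp Require Import all_classical all_reals all_analysis measurable_realfun.
From mathcomp Require Import lra ring ess_sup_inf zify.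
Import Order.TTheory GRing.Theory Num.Theory numFieldNormedType.Exports.
Local Open Scope ring_scope.
Local Open Scope classical_set_scope.

Section gen.
Context {R : realType} d (T : measurableType d) (mu : {measure set T -> \bar R}).
Local Open Scope ereal_scope.
Import HBNNSimple.

Lemma le_integral_any (F G : T -> \bar R) :
  (forall x, 0 <= F x) -> (forall x, F x <= G x) ->
  \int[mu]_x F x <= \int[mu]_x G x.
Proof.
move=> F0 FG; have G0 x : 0 <= G x by apply: le_trans (F0 x) (FG x).
rewrite !ge0_integralTE//; apply: ereal_sup_le => _ [h /= hF <-].
by exists h => //= x; apply: le_trans (hF x) (FG x).
Qed.

Lemma le_integral_ae (F G : T -> \bar R) :
  (forall x, 0 <= F x) -> measurable_fun setT G -> (forall x, 0 <= G x) ->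
  {ae mu, forall x, F x <= G x} ->
  \int[mu]_x F x <= \int[mu]_x G x.
Proof.
move=> F0 mG G0 FG; rewrite [leLHS]ge0_integralTE//.
apply: ge_ereal_sup => _ [h /= hF <-].
have := integral_nnsfun mu measurableT h; rewrite patch_setT => <-.
apply: ae_ge0_le_integral => //.
- by move=> x _; rewrite lee_fin.
- by apply/measurable_EFinP; exact: measurable_funP.
- by apply: filterS FG => x hx _; apply: le_trans (hF x) hx.
Qed.
Lemma ae_mono (P Q : T -> Prop) : {ae mu, forall x, P x} ->
  (forall x, P x -> Q x) -> {ae mu, forall x, Q x}.
Proof.
case=> N [mN N0 sub] PQ; exists N; split => // x /= nQ; apply: sub => /= hP.
by apply: nQ; exact: PQ.
Qed.
Lemma ae_and (P Q : T -> Prop) : {ae mu, forall x, P x} ->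
  {ae mu, forall x, Q x} -> {ae mu, forall x, P x /\ Q x}.
Proof. by move=> hP hQ; exact: filterI. Qed.
End gen.

Lemma mrefl {R : realType} (c : R) : measurable_fun [set: R] (fun x : R => c - x).
Proof. by apply: measurable_funB => //; exact: measurable_cst. Qed.

Definition reflm {R : realType} (c : R) : set (measurableTypeR R) -> \bar R :=
  pushforward (@lebesgue_measure R) (fun x : measurableTypeR R => (c - x : R)).

Lemma mreflT {R : realType} (c : R) :
  measurable_fun [set: measurableTypeR R] (fun x : measurableTypeR R => (c - x : R) : measurableTypeR R).
Proof. exact (mrefl c). Qed.

Section reflm.
Context {R : realType} (c : R).
Local Open Scope ereal_scope.
Let reflm0 : reflm c set0 = 0.
Proof. by rewrite /reflm /pushforward preimage_set0 measure0. Qed.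
Let reflm_ge0 A : 0 <= reflm c A.
Proof. by rewrite /reflm /pushforward; apply: measure_ge0; rewrite -[X in measurable X]setTI; exact: mreflT. Qed.
Let reflm_sigma_additive : semi_sigma_additive (reflm c).
Proof.
move=> F mF tF mUF; rewrite /reflm /pushforward preimage_bigcup.
apply: measure_semi_sigma_additive.
- by move=> n; rewrite -[X in measurable X]setTI; exact: mreflT.
- apply/trivIsetP => /= i j _ _ ij; rewrite -preimage_setI.
  by move/trivIsetP : tF => /(_ _ _ _ _ ij) ->//; rewrite preimage_set0.
- by rewrite -preimage_bigcup -[X in measurable X]setTI; exact: mreflT.
Qed.
HB.instance Definition _ := isMeasure.Build _ _ _
  (reflm c) reflm0 reflm_ge0 reflm_sigma_additive.
End reflm.

Lemma lebesgue_refl {R : realType} (c : R) (A : set R) : measurable A ->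
  lebesgue_measure ((fun x => c - x) @^-1` A) = lebesgue_measure A.
Proof.
move=> mA; rewrite -[LHS]/(reflm c A).
symmetry; apply: (@lebesgue_measure_unique R (reflm c)) => //= _ [[a b]] _ <-.
rewrite /reflm /pushforward.
have -> : (fun x : R => c - x) @^-1` `]a, b]%classic = `[c - b, c - a[%classic.
  apply/seteqP; split => x /=; rewrite !in_itv/=.
    by move=> /andP[h1 h2]; apply/andP; split; lra.
  by move=> /andP[h1 h2]; apply/andP; split; lra.
rewrite !lebesgue_measure_itv/= !lte_fin.
have -> : (c - b < c - a) = (a < b) by apply/idP/idP; lra.
by case: ifP => // _; rewrite -!EFinD; congr EFin; lra.
Qed.

Section transfer.
Context {R : realType} (c del : R).
Hypothesis del0 : 0 < del.
Local Notation mu := (@lebesgue_measure R).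
Local Notation mu1 := (mrestr mu (measurable_itv `[c - del, c]%R)).
Local Notation mu0 := (mrestr mu (measurable_itv `[0, del]%R)).

Lemma restr_refl (A : set R) : measurable A ->
  mu1 ((fun x => c - x) @^-1` A) = mu0 A.
Proof.
move=> mA; rewrite /mrestr.
have -> : (fun x => c - x) @^-1` A `&` `[c - del, c]%classic =
    (fun x => c - x) @^-1` (A `&` `[0, del]%classic).
  { apply/seteqP; split => x /= [h1].
  all: rewrite ?in_setE/= ?in_itv/= => /andP[h2 h3]; split => //.
  all: rewrite ?in_setE/= ?in_itv/=; apply/andP; split; lra. }
rewrite lebesgue_refl//; exact: measurableI.
Qed.

Lemma ae_refl (P : R -> Prop) : {ae mu0, forall y, P y} ->
  {ae mu1, forall x, P (c - x)}.
Proof.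
case=> N [mN N0 sub]; exists ((fun x => c - x) @^-1` N); split.
- by rewrite -[X in measurable X]setTI; exact: (mrefl c) measurableT _ mN.
- by rewrite restr_refl.
- by move=> x /= nP; apply: sub.
Qed.

Lemma ae_itv1 : {ae mu1, forall x, c - del <= x < c}.
Proof.
have mD1 : measurable (`[c - del, c]%classic : set R) := measurable_itv _.
have m1 : measurable ([set c] : set R) := measurable_set1 c.
have mN : measurable (~` `[c - del, c]%classic `|` [set c] : set R).
  by apply: measurableU => //; exact: measurableC.
exists (~` `[c - del, c]%classic `|` [set c]); split => //.
- rewrite /mrestr; apply/eqP; rewrite eq_le measure_ge0 andbT.
  rewrite -(lebesgue_measure_set1 c) le_measure ?inE.
  all: try (by move=> x /= [[h|->] h'] //; exfalso; exact: h h').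
  all: try exact: measurableI mN mD1.
  all: try exact: m1.
  all: try done.
- move=> x /= h; have [xD|xD] := pselect (`[c - del, c]%classic x); last by left.
  right; move: xD; rewrite /= in_itv/= => /andP[h1 h2].
  apply/eqP; rewrite eq_le h2 /= leNgt; apply/negP => h3; apply: h; lra.
Qed.

Lemma fin_transfer (K A q : R) (f g : R -> R) : 0 < q -> 0 <= K -> 0 <= A ->
  measurable_fun `[0, del]%classic f ->
  (forall x, c - del <= x < c -> `|g x| <= K * `|f (c - x)|) ->
  (Lnorm mu0 q%:E (EFin \o f) <= A%:E)%E ->
  (Lnorm mu1 q%:E (EFin \o g) <= (K * A)%:E)%E.
Proof.
move=> q0 K0 A0 mf gf; rewrite unlock /Lnorm.
have q0' : q != 0 by rewrite gt_eqF.
set I0 := (\int[mu0]_x _)%E; set I1 := (\int[mu1]_x _)%E => H.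
have I00 : (0 <= I0)%E by apply: integral_ge0 => x _; exact: poweR_ge0.
have I10 : (0 <= I1)%E by apply: integral_ge0 => x _; exact: poweR_ge0.
have hI0 : (I0 <= (A `^ q)%:E)%E.
  have -> : I0 = ((I0 `^ q^-1) `^ q)%E by rewrite -poweRrM mulVf// poweRe1.
  rewrite -poweR_EFin; apply: gt0_ler_poweR => //; first exact: ltW.
  - by rewrite in_itv/= poweR_ge0 leey.
  - by rewrite in_itv/= lee_fin A0 leey.
suff hI1 : (I1 <= ((K * A) `^ q)%:E)%E.
  have KA0 : 0 <= K * A by exact: mulr_ge0.
  rewrite -[X in (_ <= X%:E)%E](powRr1 KA0) -(mulfV q0') powRrM -poweR_EFin.
  apply: gt0_ler_poweR => //; first by rewrite invr_ge0 ltW.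
  - by rewrite in_itv/= I10 leey.
  - by rewrite in_itv/= lee_fin powR_ge0 leey.
pose D0 := (`[0, del]%classic : set R).
have mD0 : measurable D0 := measurable_itv _.
pose F0 := (fun y => ((K * `|f y|) `^ q)%:E) \_ D0.
pose M := (fun y => (`|f y| `^ q)%:E) \_ D0.
have F00 y : (0 <= F0 y)%E by rewrite /F0 /patch; case: ifP => // _; rewrite lee_fin powR_ge0.
have M0 y : (0 <= M y)%E by rewrite /M /patch; case: ifP => // _; rewrite lee_fin powR_ge0.
have mfn : measurable_fun D0 (Num.norm \o f).
  by apply: measurableT_comp => //; exact: normr_measurable.
have mF0 : measurable_fun setT F0.
  apply/(measurable_restrictT _ _).1 => //; apply/measurable_EFinP.
  apply: measurableT_comp (measurable_powR _) _.
  by apply: measurable_funM => //; exact: measurable_cst.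
have mM : measurable_fun setT M.
  apply/(measurable_restrictT _ _).1 => //; apply/measurable_EFinP.
  exact: measurableT_comp (measurable_powR _) _.
have mF1 : measurable_fun setT (F0 \o (fun x => (c - x)%R)).
  exact: measurableT_comp mF0 (mrefl c).
have step1 : (I1 <= \int[mu1]_x (F0 \o (fun x => (c - x)%R)) x)%E.
  apply: le_integral_ae => //; [by move=> x; exact: poweR_ge0|by move=> x; exact: F00|].
  apply: ae_mono; first exact: ae_itv1.
  move=> x /andP[hx1 hx2].
  have xD : D0 (c - x) by rewrite /D0 /= in_itv/=; apply/andP; split; lra.
  rewrite /= /F0 /patch ifT ?in_setE// lee_fin.
  apply: (ge0_ler_powR (ltW q0)); rewrite ?nnegrE//.
  - by apply: mulr_ge0.
  - by apply: gf; rewrite hx1 hx2.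
have step2 : (\int[mu1]_x (F0 \o (fun x => (c - x)%R)) x = \int[mu0]_x F0 x)%E.
  have mF0' : measurable_fun [set: measurableTypeR R] F0 by exact mF0.
  have := @ge0_integral_pushforward _ _ (measurableTypeR R) (measurableTypeR R) R
    (fun x : measurableTypeR R => (c - x : R) : measurableTypeR R) (mreflT c)
    mu1 setT F0 measurableT mF0' (fun y _ => F00 y).
  rewrite preimage_setT => <-.
  apply: eq_measure_integral; first exact: mreflT.
  move=> ? B mB _; exact (restr_refl B mB).
have step3 : (\int[mu0]_x F0 x = (K `^ q)%:E * \int[mu0]_x M x)%E.
  rewrite -ge0_integralZl_EFin//; last by rewrite powR_ge0.
  apply: eq_integral => y _; rewrite /F0 /M /patch; case: ifP => _; last by rewrite mule0.
  by rewrite -EFinM powRM.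
have step4 : (\int[mu0]_x M x <= I0)%E.
  apply: le_integral_any => // y; rewrite /M /patch; case: ifP => _.
    exact: lexx.
  exact: poweR_ge0.
apply: (le_trans step1); rewrite step2 step3 powRM// EFinM.
by apply: lee_wpmul2l; [rewrite lee_fin powR_ge0|exact: le_trans step4 hI0].
Qed.

Lemma mu0T : (0 < mu0 setT)%E.
Proof. by rewrite /mrestr setTI lebesgue_measure_itv/= !lte_fin del0 -EFinD lte_fin oppr0 addr0. Qed.
Lemma mu1T : (0 < mu1 setT)%E.
Proof.
rewrite /mrestr setTI lebesgue_measure_itv/= !lte_fin.
have -> : c - del < c by rewrite ltrBlDr ltrDl.
by rewrite -EFinD lte_fin opprB addrC subrK.
Qed.

Lemma inf_transfer (K A : R) (f g : R -> R) : 0 <= K ->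
  (forall x, c - del <= x < c -> `|g x| <= K * `|f (c - x)|) ->
  (Lnorm mu0 +oo%E (EFin \o f) <= A%:E)%E ->
  (Lnorm mu1 +oo%E (EFin \o g) <= (K * A)%:E)%E.
Proof.
move=> K0 gf; rewrite unlock /Lnorm mu0T mu1T => /ess_supP H.
apply/ess_supP.
have H1 := @ae_refl (fun y => ((abse \o (EFin \o f)) y <= A%:E)%E) H.
apply: ae_mono; first by apply: ae_and; [exact: H1|exact: ae_itv1].
move=> x /= [h1 /andP[hx1 hx2]].
rewrite lee_fin; apply: (le_trans (gf x _)); first by rewrite hx1 hx2.
by apply: ler_wpM2l => //; move: h1; rewrite lee_fin.
Qed.
End transfer.

Section wlemmas.
Context {R : realType} (w : R -> R).
Hypothesis hw : modulus_type w.

Lemma w_ge0 x : 0 <= x <= 2 * pi -> 0 <= w x.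
Proof.
case: hw => wmono _ w0 _ /andP[x0 x2]; rewrite -w0; apply: wmono => //.
- by rewrite in_itv/= lexx /= mulr_ge0 // pi_ge0.
- by rewrite in_itv/= x0 x2.
Qed.

Lemma w_mulk s (k : nat) : 0 < s <= 2 * pi -> forall t, 0 <= t -> t <= k%:R * s ->
  t <= 2 * pi -> w t <= k%:R * w s.
Proof.
case: hw => wmono _ w0 wsub /andP[s0 s2]; have pi0 := pi_gt0 R.
have ws0 : 0 <= w s by apply: w_ge0; rewrite s2 ltW.
elim: k => [|k IH] t t0 tk t2.
  have -> : t = 0 by apply/eqP; rewrite eq_le t0 andbT; move: tk; rewrite mul0r.
  by rewrite w0 mul0r.
have k0 : 0 <= k%:R :> R by [].
have [ts|st] := leP t s.
  have : w t <= w s by apply: wmono => //; rewrite in_itv/= ?t0 ?(ltW s0) /=; lra.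
  rewrite -natr1; nra.
have u0 : 0 <= t - s by lra.
have uk : t - s <= k%:R * s by move: tk; rewrite -natr1; lra.
have hu := IH (t - s) u0 uk ltac:(lra).
rewrite -natr1.
have [su|us] := leP s (t - s).
  have := wsub s (t - s) (ltW s0) su ltac:(lra).
  rewrite addrC subrK => h; lra.
have := wsub (t - s) s u0 (ltW us) ltac:(lra).
rewrite subrK => h; lra.
Qed.

Lemma w_pi s : 0 < s <= pi -> s * w pi <= 2 * pi * w s.
Proof.
move=> /andP[s0 spi]; have pi0 := pi_gt0 R.
have ws0 : 0 <= w s by apply: w_ge0; rewrite ltW//=; lra.
have y0 : 0 <= pi / s by rewrite divr_ge0// ltW.
have /andP[t1 t2] := truncn_itv y0.
set t := Num.truncn (pi / s) in t1 t2.
have ts : t%:R * s <= pi by rewrite -ler_pdivlMr.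
have ts2 : pi < t.+1%:R * s by rewrite -ltr_pdivrMr.
have := @w_mulk s t.+1 ltac:(apply/andP; split; lra) pi (ltW pi0) (ltW ts2) ltac:(lra).
move: ts2; rewrite -natr1 => ts2 h.
nra.
Qed.
End wlemmas.

Lemma sin_kpi {R : realType} (k : nat) (z : R) : `|sin (k%:R * pi - z)| = `|sin z|.
Proof.
elim: k => [|k IH]; first by rewrite mul0r sub0r sinN normrN.
have -> : k.+1%:R * pi - z = (k%:R * pi - z) + pi by rewrite -natr1; ring.
by rewrite sinDpi normrN.
Qed.

Lemma mes_f {R : realType} (beta rR del : R) (w : R -> R) : modulus_type w ->
  del <= 2 * pi ->
  measurable_fun `[0, del]%classic (fun s => w s / (s * sin (rR * s / 2) `^ beta)).
Proof.
case=> _ wc _ _ del2.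
have mw : measurable_fun `[0, 2 * pi]%classic w.
  exact: subspace_continuous_measurable_fun (measurable_itv _) wc.
pose nf := (w \* ((@powR R ^~ (-1)) \o
    ((fun s : R => s) \* ((@powR R ^~ beta) \o (sin \o (fun s : R => rR * s / 2)))))).
suff mnf : measurable_fun `[0, del]%classic nf.
  apply: eq_measurable_fun mnf.
  move=> s; rewrite in_setE /= in_itv/= => /andP[s0 _].
  by rewrite /nf /= powR_inv1// mulr_ge0// powR_ge0.
apply: measurable_funM.
  apply: measurable_funS mw => //.
  by move=> y; rewrite /= !in_itv/= => /andP[y0 y1]; apply/andP; split; lra.
apply: measurableT_comp; first exact: measurable_powR.
apply: measurable_funM => //.
apply: measurableT_comp; first exact: measurable_powR.
apply: measurableT_comp; first by apply: continuous_measurable_fun; exact: continuous_sin.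
apply: measurable_funM => //.
Qed.

Lemma pw {R : realType} (beta : R) (r m n : nat) (w : R -> R) :
  (2 <= r)%N -> (m < r./2)%N -> modulus_type w ->
  forall x, 2 * m.+1%:R * pi / r%:R - pi / (r%:R * n.+1%:R) <= x < 2 * m.+1%:R * pi / r%:R ->
  `|w x / (x * `|sin (r%:R * x / 2)| `^ beta)| <=
  (2 * r%:R) * `|w (2 * m.+1%:R * pi / r%:R - x) /
     ((2 * m.+1%:R * pi / r%:R - x) * sin (r%:R * (2 * m.+1%:R * pi / r%:R - x) / 2) `^ beta)|.
Proof.
move=> r2 mr hw x.
set c := 2 * m.+1%:R * pi / r%:R; set del := pi / (r%:R * n.+1%:R).
move=> /andP[hx1 hx2].
set rR := r%:R; set s := c - x.
have pi0 := pi_gt0 R.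
have rR2 : (2 : R) <= rR by rewrite /rR (ler_nat R 2 r).
have mr2 : (2 * m.+1 <= r)%N.
  have := odd_double_half r; rewrite -muln2 => e.
  by move: mr; rewrite -{2}e; case: (odd r) => /=; lia.
have mr2R : 2 * m.+1%:R <= rR by rewrite /rR -(ler_nat R) natrM in mr2.
have m1 : 1 <= m.+1%:R :> R by rewrite (ler_nat R 1).
have N1 : 1 <= n.+1%:R :> R by rewrite (ler_nat R 1).
have rR0 : rR != 0 by rewrite gt_eqF//; lra.
have N0 : n.+1%:R != 0 :> R by rewrite gt_eqF//; lra.
have hdel : del * (rR * n.+1%:R) = pi.
  by rewrite /del; field; rewrite nat1r N0 rR0.
have del0 : 0 < del by rewrite /del divr_gt0// mulr_gt0//; lra.
have hc : c * rR = 2 * m.+1%:R * pi by rewrite /c; field.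
have rdel : rR * del <= pi by nra.
have cpi : c <= pi by nra.
have c2 : 2 * pi <= c * rR by nra.
have xr : pi <= x * rR by nra.
have x0 : 0 < x by nra.
have xpi : x <= pi by lra.
have s0 : 0 < s by rewrite /s; lra.
have sdel : s <= del by rewrite /s; lra.
have spi : s <= pi by nra.
have e1 : rR * x / 2 = m.+1%:R * pi - rR * s / 2 by rewrite /s; lra.
have sin0 : 0 < sin (rR * s / 2).
  by apply: sin_gt0_pi; apply/andP; split; nra.
rewrite e1 sin_kpi (gtr0_norm sin0).
set P := sin (rR * s / 2) `^ beta.
have P0 : 0 < P by apply: powR_gt0.
have wx0 : 0 <= w x by apply: w_ge0 => //; apply/andP; split; lra.
have ws0 : 0 <= w s by apply: w_ge0 => //; apply/andP; split; lra.
have wxpi : w x <= w pi.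
  by case: hw => wmono _ _ _; apply: wmono; rewrite // in_itv/=; apply/andP; split; lra.
set a := w s / s.
have a0 : 0 <= a by rewrite /a divr_ge0// ltW.
have ea : w s = a * s by rewrite /a divfK// gt_eqF.
have hpi : w pi <= 2 * pi * a.
  rewrite -(ler_pM2r s0).
  have : s * w pi <= 2 * pi * w s by apply: w_pi => //; apply/andP; split; lra.
  rewrite ea; nra.
have -> : w x / (x * P) = (w x / x) / P by field; rewrite ?gt_eqF.
have -> : w s / (s * P) = a / P by rewrite /a; field; rewrite ?gt_eqF.
rewrite ger0_norm; last by rewrite !divr_ge0// ltW.
rewrite ger0_norm; last by rewrite !divr_ge0// ltW.
rewrite mulrA ler_pM2r ?invr_gt0// ler_pdivrMr//.
nra.
Qed.

Local Close Scope classical_set_scope.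

Theorem lemma6 (R : realType) (p beta : R) (r : nat) (w : R -> R) :
  1 <= p -> (2 <= r)%N -> modulus_type w ->
  (exists C : R, forall n : nat,
     (itv_norm (conj_exp p) 0 (pi / (r%:R * n.+1%:R))
        (fun t => (w t / (t * sin (r%:R * t / 2) `^ beta)%R))
      <= (C * n.+1%:R `^ (beta + p^-1) * w (pi / n.+1%:R))%:E)%O) ->
  forall m : nat, (m < r./2)%N ->
  exists C' : R, forall n : nat,
     (itv_norm (conj_exp p)
        (2 * m.+1%:R * pi / r%:R - pi / (r%:R * n.+1%:R))
        (2 * m.+1%:R * pi / r%:R)
        (fun t => (w t / (t * `|sin (r%:R * t / 2)| `^ beta)%R))
      <= (C' * n.+1%:R `^ (beta + p^-1) * w (pi / n.+1%:R))%:E)%O.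
Proof.
move=> p1 r2 hw [C hC] m mr.
exists (2 * r%:R * C) => n.
have := hC n.
set del := pi / (r%:R * n.+1%:R); set c := 2 * m.+1%:R * pi / r%:R.
set A := C * n.+1%:R `^ (beta + p^-1) * w (pi / n.+1%:R).
have pi0 := pi_gt0 R.
have rR2 : (2 : R) <= r%:R by rewrite (ler_nat R 2 r).
have N1 : 1 <= n.+1%:R :> R by rewrite (ler_nat R 1).
have del0 : 0 < del by rewrite /del divr_gt0// mulr_gt0//; lra.
have hdel : del * (r%:R * n.+1%:R) = pi.
  by rewrite /del; field; rewrite nat1r !gt_eqF//; lra.
have del2 : del <= 2 * pi.
  have X2 : 2 <= r%:R * n.+1%:R :> R by nra.
  move: hdel X2; set X := r%:R * n.+1%:R => hdel X2; nra.
have K0 : 0 <= 2 * r%:R :> R by lra.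
have -> : 2 * r%:R * C * n.+1%:R `^ (beta + p^-1) * w (pi / n.+1%:R) = 2 * r%:R * A.
  by rewrite /A !mulrA.
rewrite /itv_norm => H.
have A0 : 0 <= A by rewrite -lee_fin; apply: le_trans H; exact: Lnorm_ge0.
have hpw := @pw R beta r m n w r2 mr hw.
move: H; rewrite /conj_exp; case: eqP => [_|pn1] H.
  exact: (@inf_transfer R c del del0 (2 * r%:R) A
    (fun t => w t / (t * sin (r%:R * t / 2) `^ beta))
    (fun t => w t / (t * `|sin (r%:R * t / 2)| `^ beta)) K0 hpw H).
have p1' : 1 < p by rewrite lt_neqAle eq_sym; apply/andP; split => //; apply/eqP.
have q0 : 0 < p / (p - 1) by rewrite divr_gt0//; lra.
have h := (@fin_transfer R c del (2 * r%:R) A (p / (p - 1))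
    (fun t => w t / (t * sin (r%:R * t / 2) `^ beta))
    (fun t => w t / (t * `|sin (r%:R * t / 2)| `^ beta))
    q0 K0 A0 (mes_f beta (r%:R) del w hw del2) hpw H).
exact h.
Qed.
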